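(* Let $p>1$ and let $f:\mathbb{N}\to\mathbb{R}_{\geq 0}$ be a concave function with property $(C_p)$. Then there exists a constant $C$ (depending only on $f$ and $p$) such that for every finite subset $M=\{m_1,m_2,\dots,m_{2k}\}$ of $\mathbb{N}$ with $m_i<m_{i+1}$ for all $i$ and $m_1\geq 1$, \[ \sum_{i=1}^k \left(\frac{f(m_{2i})}{m_{2i}}\right)^p\frac{m_{2i}-m_{2i-1}}{m_{2i}} \leq C. \] Moreover, if in addition $m_{2i}\leq 2m_{2i-1}$ for each $i$, then \[ \sum_{i=1}^k \left(\frac{f(m_{2i-1})}{m_{2i-1}}\right)^p\frac{m_{2i}-m_{2i-1}}{m_{2i-1}} \leq 2^{p+1}C. \]
   Context: A function $f:\mathbb{N}\to\mathbb{R}_{\geq 0}$ is called concave if $f$ is non-decreasing and for all $m,n\in\mathbb{N}$ with $n\geq m$ one has $f(n+m)-f(n)\leq f(n)-f(n-m)$. Such an $f$ has property $(C_p)$ if $\sum_{n=1}^\infty \frac{1}{n}\left(\frac{f(n)}{n}\right)^p<\infty$. *)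

(* Defs.v *)
(* R : realType; real powers via powR (0 `^ p = 0 for p <> 0). *)
From mathcomp Require Import all_boot all_order all_algebra.
From mathcomp Require Import all_classical all_reals all_analysis.
Set Implicit Arguments. Unset Strict Implicit. Unset Printing Implicit Defensive.
Import Order.TTheory GRing.Theory Num.Theory numFieldNormedType.Exports.
Local Open Scope ring_scope.

Definition concave_fun {R : realType} (f : nat -> R) : Prop :=
  (forall n, 0 <= f n) /\
  (forall n1 n2 : nat, (n1 <= n2)%N -> f n1 <= f n2) /\
  (forall m n : nat, (m <= n)%N -> f (n + m)%N - f n <= f n - f (n - m)%N).

Definition prop_Cp {R : realType} (p : R) (f : nat -> R) : Prop :=
  cvgn (series (fun n : nat => ((f n.+1 / n.+1%:R) `^ p) / n.+1%:R)).

(* Main.v *)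
Require Import Defs.
From mathcomp Require Import all_boot all_order all_algebra.
From mathcomp Require Import all_classical all_reals all_analysis.
From mathcomp Require Import ring lra zify.
Import Order.TTheory GRing.Theory Num.Theory numFieldNormedType.Exports.
Local Open Scope ring_scope.

Section H.
Variable R : realType.
Implicit Types f : nat -> R.

Lemma cstep f : concave_fun f -> forall n, n%:R * f n.+1 <= n.+1%:R * f n.
Proof.
case=> [f0 [fmon fc]].
have g: forall n, 0 <= f n - n%:R * (f n.+1 - f n).
  elim=> [|n IH]; first by rewrite mul0r subr0.
  have := fc 1%N n.+1 isT; rewrite addn1 subn1 /= => h.
  have h2: n.+1%:R * (f n.+2 - f n.+1) <= n.+1%:R * (f n.+1 - f n).
    by rewrite ler_wpM2l.
  apply: le_trans IH _; rewrite -natr1 in h2 *; nra.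
move=> n; have := g n; rewrite -natr1; nra.
Qed.

Lemma cratio f : concave_fun f -> forall n N, (1 <= n <= N)%N ->
  f N / N%:R <= f n / n%:R.
Proof.
move=> hf n; elim=> [|N IH]; first by case/andP=> /leq_trans h /h.
case/andP=> h1; rewrite leq_eqVlt => /orP[/eqP->//|hN].
have hN1 : (0 < N)%N by apply: leq_trans h1 hN.
apply: le_trans (IH _); last by rewrite h1.
have Np : (0:R) < N%:R by rewrite ltr0n.
rewrite ler_pdivrMr // mulrAC ler_pdivlMr ?ltr0n //.
by rewrite mulrC [X in _ <= X]mulrC cstep.
Qed.

Definition aa f p (n : nat) : R := (f n.+1 / n.+1%:R) `^ p / n.+1%:R.

Lemma aa_ge0 f p n : 0 <= aa f p n.
Proof. by rewrite /aa divr_ge0 ?powR_ge0. Qed.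

Lemma series_mono f p : {homo series (aa f p) : n m / (n <= m)%N >-> n <= m}.
Proof.
move=> n m nm; rewrite -subr_ge0 sub_series_geq //.
by apply: sumr_ge0 => i _; apply: aa_ge0.
Qed.

Lemma term_le f p (a b : nat) : concave_fun f -> 0 <= p -> (a <= b)%N ->
  (f b / b%:R) `^ p * ((b%:R - a%:R) / b%:R) <= series (aa f p) b - series (aa f p) a.
Proof.
move=> hf p0 ab; rewrite sub_series_geq //.
have hf0 : forall n, 0 <= f n by case: hf.
apply: (@le_trans _ _ (\sum_(a <= n < b) (f b / b%:R) `^ p / b%:R)); last first.
  apply: ler_sum_nat => i /andP[ai ib]; rewrite /aa.
  apply: ler_pM; rewrite ?powR_ge0 ?invr_ge0 ?ler0n //.
    apply: ge0_ler_powR => //; rewrite ?nnegrE ?divr_ge0 ?ler0n //.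
    by apply: cratio.
  by rewrite lef_pV2 ?posrE ?ltr0n ?ler_nat //; apply: leq_ltn_trans ib.
rewrite sumr_const_nat -natrB // -mulr_natr mulrA mulrAC.
by rewrite !mul1r mulr_natr.
Qed.

Definition TT f p (m : nat -> nat) (i : nat) : R :=
  (f (m (2 * i)%N) / (m (2 * i)%N)%:R) `^ p
          * (((m (2 * i)%N)%:R - (m (2 * i).-1)%:R) / (m (2 * i)%N)%:R).

Lemma series_ge0 f p n : 0 <= series (aa f p) n.
Proof. by rewrite seriesEnat /= sumr_ge0 // => i _; apply: aa_ge0. Qed.

Lemma sum_le f p m : concave_fun f -> 0 <= p -> forall k,
  (forall i : nat, (1 <= i < 2 * k.+1)%N -> (m i < m i.+1)%N) ->
  \sum_(1 <= i < k.+2) TT f p m i <= series (aa f p) (m (2 * k.+1)%N).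
Proof.
move=> hf p0; elim=> [|k IH] hm.
  rewrite big_nat1 /TT muln1 /=.
  apply: le_trans (term_le _ _ _ _ hf p0 (ltnW (hm 1%N isT))) _.
  by rewrite lerBlDr lerDl series_ge0.
rewrite big_nat_recr //=.
have e : (2 * k.+2).-1 = (2 * k.+1)%N.+1 by lia.
have hT := term_le _ _ _ _ hf p0 (ltnW (hm (2 * k.+1)%N.+1 ltac:(lia))).
have hI := IH (fun i hi => hm i ltac:(lia)).
have hS := series_mono f p _ _ (ltnW (hm (2 * k.+1)%N ltac:(lia))).
have e2 : (2 * k.+1)%N.+2 = (2 * k.+2)%N by lia.
rewrite e2 in hT.
rewrite /TT e. rewrite /TT in hI. lra.
Qed.

Lemma term2 f p (a b : nat) : concave_fun f -> 0 <= p -> (1 <= a)%N -> (a <= b)%N ->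
  (b <= 2 * a)%N ->
  (f a / a%:R) `^ p * ((b%:R - a%:R) / a%:R) <=
  2 `^ (p + 1) * ((f b / b%:R) `^ p * ((b%:R - a%:R) / b%:R)).
Proof.
case=> hf0 [hmon hc] p0 a1 ab b2.
have ap : (0:R) < a%:R by rewrite ltr0n.
have bp : (0:R) < b%:R by rewrite ltr0n; apply: leq_trans ab.
have bb : (b%:R:R) <= 2 * a%:R by rewrite -(natrM R 2 a) ler_nat.
have ia : a%:R^-1 <= 2 / b%:R :> R.
  by rewrite ler_pdivlMr // mulrC ler_pdivrMr.
have h1 : f a / a%:R <= 2 * (f b / b%:R).
  rewrite mulrCA; apply: ler_pM => //.
  by apply: hmon.
have h1' : (f a / a%:R) `^ p <= 2 `^ p * (f b / b%:R) `^ p.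
  rewrite -powRM ?divr_ge0 ?ler0n //; apply: ge0_ler_powR => //;
  by rewrite nnegrE ?mulr_ge0 ?divr_ge0 ?ler0n.
have ba : (0:R) <= b%:R - a%:R by rewrite subr_ge0 ler_nat.
have h2 : (b%:R - a%:R) / a%:R <= 2 * ((b%:R - a%:R) / b%:R) :> R.
  by rewrite mulrCA; apply: ler_wpM2l.
rewrite powRD ?pnatr_eq0 ?implybT // powRr1 //.
apply: le_trans (ler_pM _ _ h1' h2) _; rewrite ?powR_ge0 ?divr_ge0 //.
by rewrite le_eqVlt; apply/orP; left; apply/eqP; ring.
Qed.
End H.
Arguments aa {R}. Arguments TT {R}. Arguments series_mono {R}. Arguments series_ge0 {R}. Arguments sum_le {R}. Arguments term2 {R}.

Theorem lemma2p3 (R : realType) (p : R) (f : nat -> R) :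
  1 < p -> concave_fun f -> prop_Cp p f ->
  exists C : R,
    forall (k : nat) (m : nat -> nat),
      (1 <= m 1)%N ->
      (forall i : nat, (1 <= i < 2 * k)%N -> (m i < m i.+1)%N) ->
      (\sum_(1 <= i < k.+1)
          (f (m (2 * i)%N) / (m (2 * i)%N)%:R) `^ p
          * (((m (2 * i)%N)%:R - (m (2 * i).-1)%:R) / (m (2 * i)%N)%:R) <= C)
      /\
      ((forall i : nat, (1 <= i <= k)%N -> (m (2 * i)%N <= 2 * m (2 * i).-1)%N) ->
       \sum_(1 <= i < k.+1)
          (f (m (2 * i).-1) / (m (2 * i).-1)%:R) `^ p
          * (((m (2 * i)%N)%:R - (m (2 * i).-1)%:R) / (m (2 * i).-1)%:R)
        <= 2 `^ (p + 1) * C).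
Proof.
move=> p1 hf hC.
have p0 : 0 <= p by apply: ltW; apply: lt_trans p1; exact: ltr01.
set C := limn (series (aa f p)).
have hCs : forall n, series (aa f p) n <= C.
  exact: (nondecreasing_cvgn_le (series_mono f p) hC).
exists C => k m m1 hm.
have part1 : \sum_(1 <= i < k.+1) TT f p m i <= C.
  case: k hm => [|k] hm.
  - by rewrite big_geq //; apply: le_trans (series_ge0 f p 0) (hCs 0%N).
  - by apply: le_trans (sum_le _ _ _ hf p0 k hm) (hCs _).
split; first exact: part1.
move=> h2.
have mono : forall j, (1 <= j <= 2 * k)%N -> (m 1 <= m j)%N.
  elim=> [|j IH]; first by [].
  case: j IH => [|j] IH hj; first by [].
  apply: leq_trans (IH ltac:(lia)) _; apply: ltnW; apply: hm; lia.
apply: le_trans (ler_wpM2l (powR_ge0 _ _) part1).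
rewrite mulr_sumr; apply: ler_sum_nat => i /andP[i1 ik].
have e : ((2 * i)%N.-1).+1 = (2 * i)%N by lia.
have := hm (2 * i)%N.-1 ltac:(lia); rewrite e => ab.
apply: term2 => //.
- by apply: leq_trans m1 (mono _ _); lia.
- exact: ltnW.
- by apply: h2; lia.
Qed.
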